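(* Let $A,B$ be finite-dimensional systems, $\{|j\rangle\}_{j=0}^{|A|-1}$ an orthonormal basis of $A$, and $U_0,\dots,U_{|A|-1}$ unitary operators on $B$. Let $\mathcal C_U\in\mathrm{Ch}(AB,AB)$ be the controlled-unitary channel $\mathcal C_U(X)=C_UXC_U^\dagger$ with $C_U=\sum_j|j\rangle\langle j|_A\otimes U_j$. Then \[ S^\downarrow_\infty(R_AA|R_BB)_{\Phi^{\mathcal C_U}}=-\log\dim\mathrm{span}\{|U_j\rangle\!\rangle\}_j, \] where $|U\rangle\!\rangle:=\sum_i(\mathbb 1_{R_B}\otimes U)|ii\rangle_{R_BB}$ is the vectorization of $U$.
   Context: $\log$ base 2. Maximally entangled state $\Phi_{RX}:=\frac1{|X|}\sum_{i,j}|ii\rangle\langle jj|$; Choi state of a channel $\mathcal N$ from $A'B'$ to $AB$ (here $A'=A$, $B'=B$): $\Phi^{\mathcal N}_{R_AAR_BB}:=(\mathrm{id}_{R_AR_B}\otimes\mathcal N)(\Phi_{R_AA'}\otimes\Phi_{R_BB'})$, $R_A\simeq A'$, $R_B\simeq B'$. $D_\infty(\rho\|\sigma):=\log\inf\{\lambda\ge0:\rho\le\lambda\sigma\}$ and for a state $\rho_{XY}$, $S^\downarrow_\infty(X|Y)_\rho:=-D_\infty(\rho_{XY}\|\mathbb 1_X\otimes\rho_Y)$. *)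

(* Defs.v *)
From HB Require Import structures.
From mathcomp Require Import all_boot all_order all_algebra.
From mathcomp Require Import complex.
From mathcomp Require Import all_classical all_reals exp.
Set Implicit Arguments. Unset Strict Implicit. Unset Printing Implicit Defensive.
Import Order.TTheory GRing.Theory Num.Theory.
Local Open Scope ring_scope.

Section QDefs.
Variable R : realType.
Local Notation C := R[i].

Definition log2 (x : R) : R := ln x / ln 2.

(* Operators on a finite-dimensional system with orthonormal basis indexed by
   the finite type T, as matrices (functions T -> T -> C). *)
Definition op (T : finType) := T -> T -> C.

Definition adj (T : finType) (M : op T) : op T := fun i j => (M j i)^*.

(* positive semidefiniteness: v^dagger M v >= 0 for all v
   (in C, [0 <= z] means z is real and nonnegative) *)
Definition psd (T : finType) (M : op T) : Prop :=
  forall v : T -> C, 0 <= \sum_i \sum_j (v i)^* * M i j * v j.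

Definition loewner_le (T : finType) (rho sigma : op T) : Prop :=
  psd (fun i j => sigma i j - rho i j).

Definition Dmax (T : finType) (rho sigma : op T) : R :=
  log2 (inf [set lam : R | 0 <= lam /\
              loewner_le rho (fun i j => (lam%:C)%C * sigma i j)]%classic).

Definition ptrace1 (X Y : finType) (rho : op (X * Y)%type) : op Y :=
  fun y y' => \sum_x rho (x, y) (x, y').

Definition id_tens (X Y : finType) (s : op Y) : op (X * Y)%type :=
  fun p q => (p.1 == q.1)%:R * s p.2 q.2.

Definition Hmin_down (X Y : finType) (rho : op (X * Y)%type) : R :=
  - Dmax rho (@id_tens X Y (ptrace1 rho)).

(* maximally entangled state Phi_{RX} on 'I_n * 'I_n (R first) *)
Definition maxent (n : nat) : op ('I_n * 'I_n)%type :=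
  fun p q => (n%:R)^-1 * ((p.1 == p.2) && (q.1 == q.2))%:R.

Definition ketbra (T : finType) (p q : T) : op T :=
  fun i j => ((i == p) && (j == q))%:R.

Definition chanAB (a b : nat) := op ('I_a * 'I_b)%type -> op ('I_a * 'I_b)%type.

(* Choi state Phi^N_{R_A A R_B B} := (id_{R_A R_B} (x) N)(Phi_{R_A A'} (x) Phi_{R_B B'}).
   Written out: Phi_{R_A A'} (x) Phi_{R_B B'} =
     sum_{ra,ra',rb,rb'} (maxent a)((ra,ra),(ra',ra')) (maxent b)((rb,rb),(rb',rb'))
       |ra rb><ra' rb'|_{R_A R_B} (x) |ra rb><ra' rb'|_{A'B'},
   so the entry of the Choi state at ((ra,x),(rb,y)), ((ra',x'),(rb',y')) is
   Phi_a((ra,ra),(ra',ra')) * Phi_b((rb,rb),(rb',rb')) * N(|ra rb><ra' rb'|)((x,y),(x',y')). *)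
Definition choi (a b : nat) (N : chanAB a b) :
    op (('I_a * 'I_a) * ('I_b * 'I_b))%type :=
  fun p q =>
    @maxent a (p.1.1, p.1.1) (q.1.1, q.1.1) * @maxent b (p.2.1, p.2.1) (q.2.1, q.2.1) *
    N (ketbra (p.1.1, p.2.1) (q.1.1, q.2.1)) (p.1.2, p.2.2) (q.1.2, q.2.2).

Definition opmul (T : finType) (M N : op T) : op T :=
  fun i j => \sum_k M i k * N k j.

Definition unitary (n : nat) (U : 'M[C]_n) : Prop :=
  forall i j : 'I_n, \sum_k U i k * (U j k)^* = (i == j)%:R.

Definition ctrlU (a b : nat) (U : 'I_a -> 'M[C]_b) : op ('I_a * 'I_b)%type :=
  fun p q => (p.1 == q.1)%:R * U p.1 p.2 q.2.

Definition ctrlU_chan (a b : nat) (U : 'I_a -> 'M[C]_b) : chanAB a b :=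
  fun X => opmul (opmul (ctrlU U) X) (adj (ctrlU U)).

(* vectorization |U>> = sum_i (1 (x) U)|ii>_{R_B B}, a row vector on R_B B
   (index (i,y) <-> mxvec_index i y); its (i,y) component is U y i. *)
Definition vecU (b : nat) (U : 'M[C]_b) : 'rV[C]_(b * b) := mxvec U^T.

Definition dim_span_vecU (a b : nat) (U : 'I_a -> 'M[C]_b) : nat :=
  \rank (\matrix_(j < a) vecU (U j)).

End QDefs.

(* Main.v *)
Require Import Defs.
From HB Require Import structures.
From mathcomp Require Import all_boot all_order all_algebra.
From mathcomp Require Import complex.
From mathcomp Require Import all_classical all_reals exp.
From mathcomp Require Import ring sesquilinear spectral.
Set Implicit Arguments. Unset Strict Implicit. Unset Printing Implicit Defensive.
Import Order.TTheory GRing.Theory Num.Theory.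
Local Open Scope ring_scope.
Section CS.
Variable C : numClosedFieldType.

Lemma CSineq (I : finType) (x y : I -> C) :
  (\sum_i x i * y i) * (\sum_i x i * y i)^* <=
  (\sum_i x i * (x i)^*) * (\sum_i y i * (y i)^*).
Proof.
set S := \sum_i x i * y i; set X := \sum_i x i * (x i)^*; set Y := \sum_i y i * (y i)^*.
have X0 : 0 <= X by apply: sumr_ge0 => i _; exact: mul_conjC_ge0.
have Y0 : 0 <= Y by apply: sumr_ge0 => i _; exact: mul_conjC_ge0.
case: (eqVneq Y 0) => [Yz|Ynz].
  have yi : forall i, y i = 0.
    move=> i; apply/eqP; rewrite -mul_conjC_eq0; apply/eqP.
    exact: (psumr_eq0P (fun i _ => mul_conjC_ge0 (y i)) Yz).
  have -> : S = 0 by rewrite /S big1 // => i _; rewrite yi mulr0.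
  by rewrite mul0r Yz mulr0.
have Ypos : 0 < Y by rewrite lt_def Ynz Y0.
have [t tdef] : exists t, t = S / Y by exists (S / Y).
have H : 0 <= \sum_i (x i - t * (y i)^*) * (x i - t * (y i)^*)^*.
  by apply: sumr_ge0 => i _; exact: mul_conjC_ge0.
have E : \sum_i (x i - t * (y i)^*) * (x i - t * (y i)^*)^* =
    X - t^* * S - t * S^* + t * t^* * Y.
  rewrite /X /S /Y rmorph_sum !mulr_sumr -!sumrB -big_split /=.
  apply: eq_bigr => i _; rewrite !(rmorphB, rmorphM) /= !conjCK. ring.
rewrite E in H.
have Yc : Y^* = Y by exact: geC0_conj.
have E2 : X - t^* * S - t * S^* + t * t^* * Y = X - S * S^* / Y.
  rewrite tdef rmorphM /= fmorphV /= Yc.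
  by field; rewrite Ynz.
by rewrite E2 subr_ge0 ler_pdivrMr // in H.
Qed.
End CS.

Section Mx.
Variable C : numClosedFieldType.
Local Open Scope sesquilinear_scope.
Local Notation adjm A := (map_mx Num.conj (trmx A)).

Definition frob m n (A : 'M[C]_(m,n)) := \sum_i \sum_k A i k * (A i k)^*.

Lemma frobE m n (A : 'M[C]_(m,n)) : \tr (A *m (adjm A)) = frob A.
Proof.
rewrite /mxtrace /frob; apply: eq_bigr => i _; rewrite mxE.
by apply: eq_bigr => k _; rewrite !mxE.
Qed.

Lemma tr_mul m n (H : 'M[C]_(m,n)) (F : 'M[C]_(n,m)) :
  \tr (H *m F) = \sum_i \sum_l H i l * F l i.
Proof. by rewrite /mxtrace; apply: eq_bigr => i _; rewrite mxE. Qed.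

Lemma adjM m n p (A : 'M[C]_(m,n)) (B : 'M[C]_(n,p)) : adjm (A *m B) = (adjm B) *m (adjm A).
Proof. by rewrite trmx_mul map_mxM. Qed.

Definition Amx a n (Vm Wm : 'M[C]_(a,n)) := (map_mx Num.conj Vm) *m Wm^T.

Lemma upper_bound a n (Wm Vm : 'M[C]_(a,n)) :
  \tr (Amx Vm Wm) * (\tr (Amx Vm Wm))^* <= (\rank Wm)%:R * frob (Amx Vm Wm).
Proof.
set A := Amx Vm Wm.
set F := schmidt (row_base Wm^T).
have Fu : F *m (adjm F) = 1%:M.
  by apply/unitarymxP; apply: schmidt_unitarymx; exact: rank_leq_col.
have sW : (Wm^T <= F)%MS.
  by rewrite /F (eqmx_schmidt_free (row_base_free _)) eq_row_base.
set G := Wm^T *m pinvmx F.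
have WG : Wm^T = G *m F by rewrite /G mulmxKpV.
set H := map_mx Num.conj Vm *m G.
have AH : A = H *m F by rewrite /H -mulmxA -WG.
have frobA : frob A = frob H.
  by rewrite -!frobE AH adjM mulmxA -(mulmxA H) Fu mulmx1.
have trA : \tr A = \sum_(p : 'I_a * 'I_(\rank Wm^T)) H p.1 p.2 * F p.2 p.1.
  by rewrite AH tr_mul pair_bigA.
have frobF : \sum_(p : 'I_a * 'I_(\rank Wm^T)) F p.2 p.1 * (F p.2 p.1)^* = (\rank Wm)%:R.
  rewrite -(pair_bigA _ (fun i l => F l i * (F l i)^* )) /= exchange_big /=.
  have -> : (\rank Wm)%:R = \tr (1%:M : 'M[C]_(\rank Wm^T)) by rewrite mxtrace1 mxrank_tr.
  by rewrite -Fu frobE.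
have frobH : frob H = \sum_(p : 'I_a * 'I_(\rank Wm^T)) H p.1 p.2 * (H p.1 p.2)^*.
  by rewrite /frob pair_bigA.
rewrite trA frobA frobH -frobF [X in _ <= X]mulrC.
exact: (CSineq (fun p => H p.1 p.2) (fun p => F p.2 p.1)).
Qed.

Lemma lower_bound a n (Wm : 'M[C]_(a,n)) :
  exists Vm : 'M[C]_(a,n),
  \tr (Amx Vm Wm) = (\rank Wm)%:R /\ frob (Amx Vm Wm) = (\rank Wm)%:R.
Proof.
set F := schmidt (row_base Wm^T).
have Fu : F *m (adjm F) = 1%:M.
  by apply/unitarymxP; apply: schmidt_unitarymx; exact: rank_leq_col.
have sW : (Wm^T <= F)%MS.
  by rewrite /F (eqmx_schmidt_free (row_base_free _)) eq_row_base.
set G := Wm^T *m pinvmx F.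
have WG : Wm^T = G *m F by rewrite /G mulmxKpV.
have rG : row_full G.
  apply/eqP/eqP; rewrite eqn_leq rank_leq_col /=.
  by have := mxrankM_maxl G F; rewrite -WG.
set Y := (adjm F) *m pinvmx G.
have YG : Y *m G = (adjm F) by rewrite /Y mulmxKpV // submx_full.
exists (map_mx Num.conj Y); set A := Amx _ _.
have VY : map_mx Num.conj (map_mx Num.conj Y) = Y by apply/matrixP => i j; rewrite !mxE conjCK.
have AF : A = (adjm F) *m F by rewrite /A /Amx VY -YG -mulmxA -WG.
have trF : \tr ((adjm F) *m F) = (\rank Wm)%:R.
  by rewrite mxtrace_mulC Fu mxtrace1 mxrank_tr.
split; first by rewrite AF.
by rewrite -frobE AF adjM trmxCK mulmxA -(mulmxA _ F) Fu mulmx1.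
Qed.
End Mx.

Lemma sum_pair (V : nmodType) (I J : finType) (F : I * J -> V) :
  \sum_p F p = \sum_i \sum_j F (i, j).
Proof. by rewrite pair_bigA; apply: eq_bigr => -[]. Qed.

Section Main.
Variables (R : realType) (a b : nat) (U : 'I_a -> 'M[R[i]]_b).
Local Notation C := R[i].
Local Notation X := ('I_a * 'I_a)%type.
Local Notation Y := ('I_b * 'I_b)%type.

Lemma cM (x y : C) : (x * y)^* = x^* * y^*. Proof. exact: rmorphM. Qed.
Lemma cS (I : finType) (F : I -> C) : (\sum_i F i)^* = \sum_i (F i)^*.
Proof. exact: rmorph_sum. Qed.

Definition phi (p : X * Y) : C := (p.1.2 == p.1.1)%:R * U p.1.2 p.2.2 p.2.1.
Definition w (j : 'I_a) (y : Y) : C := U j y.2 y.1.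
Definition cst : C := (a%:R)^-1 * (b%:R)^-1.
Local Notation rho := (choi (ctrlU_chan U)).

Lemma choiE p q : rho p q = cst * phi p * (phi q)^*.
Proof.
rewrite /choi /maxent /ctrlU_chan /opmul /adj /ketbra /= !eqxx /= !mulr1.
set s := (p.1.2, p.2.2); set t := (q.1.2, q.2.2).
set P := (p.1.1, p.2.1); set Q := (q.1.1, q.2.1).
have inner : forall k, \sum_m ctrlU U s m * ((m == P) && (k == Q))%:R
    = ctrlU U s P * (k == Q)%:R.
  move=> k; rewrite (bigD1 P) //= eqxx /= big1 ?addr0 // => m /negbTE ->.
  by rewrite mulr0.
under eq_bigr do rewrite inner.
rewrite (bigD1 Q) //= eqxx mulr1 big1 ?addr0; last first.
  by move=> k /negbTE ->; rewrite mulr0 mul0r.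
by rewrite /ctrlU /phi /= /cst mulrA.
Qed.

Lemma ptraceE y y' : ptrace1 rho y y' = cst * \sum_j w j y * (w j y')^*.
Proof.
rewrite /ptrace1; under eq_bigr do rewrite choiE.
rewrite sum_pair /= mulr_sumr; apply: eq_bigr => j _.
rewrite (bigD1 j) //= big1 ?addr0; last first.
  by move=> k /negbTE kj; rewrite /phi /= kj mul0r mulr0 mul0r.
by rewrite /phi /= eqxx !mul1r mulrA.
Qed.

Definition alpha (v : X * Y -> C) (x : X) (j : 'I_a) : C :=
  \sum_(y : Y) (v (x, y))^* * w j y.

Lemma QS (v : X * Y -> C) :
  \sum_p \sum_q (v p)^* * id_tens (ptrace1 rho) p q * v q =
  cst * \sum_x \sum_j alpha v x j * (alpha v x j)^*.
Proof.
rewrite sum_pair mulr_sumr; apply: eq_bigr => x _.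
have E : forall y, \sum_(q : X * Y) (v (x, y))^* * id_tens (ptrace1 rho) (x, y) q * v q
   = \sum_y' (v (x, y))^* * ptrace1 rho y y' * v (x, y').
  move=> y; rewrite sum_pair /= (bigD1 x) //= [X in _ + X]big1 ?addr0; last first.
    move=> x' /negbTE x'x; apply: big1 => y' _.
    by rewrite /id_tens /= eq_sym x'x mul0r mulr0 mul0r.
  by apply: eq_bigr => y' _; rewrite /id_tens /= eqxx mul1r.
under eq_bigr do rewrite E.
under eq_bigr do under eq_bigr do rewrite ptraceE.
rewrite /alpha mulr_sumr.
rewrite [RHS](eq_bigr (fun j => \sum_y \sum_y' cst * ((v (x,y))^* * w j y) *
     ((v (x,y'))^* * w j y')^*)); last first.
  move=> j _; rewrite rmorph_sum big_distrlr mulr_sumr; apply: eq_bigr => y _.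
  rewrite mulr_sumr; apply: eq_bigr => y' _ /=; ring.
rewrite [RHS]exchange_big; apply: eq_bigr => y _; rewrite [RHS]exchange_big; apply: eq_bigr => y' _ /=.
rewrite mulr_sumr mulr_sumr mulr_suml; apply: eq_bigr => j _.
rewrite rmorphM /= conjCK; ring.
Qed.

Definition beta (v : X * Y -> C) : C := \sum_j alpha v (j, j) j.

Lemma QR (v : X * Y -> C) :
  \sum_p \sum_q (v p)^* * rho p q * v q = cst * (beta v * (beta v)^*).
Proof.
have B : \sum_p (v p)^* * phi p = beta v.
  rewrite sum_pair sum_pair /beta; apply: eq_bigr => j _.
  rewrite (bigD1 j) //= [X in _ + X]big1 ?addr0.
    by rewrite /alpha; apply: eq_bigr => y _; rewrite /phi /= eqxx mul1r.
  by move=> k /negbTE kj; apply: big1 => y _; rewrite /phi /= kj mul0r mulr0.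
rewrite -B cS big_distrlr mulr_sumr; apply: eq_bigr => p _.
rewrite mulr_sumr; apply: eq_bigr => q _; rewrite choiE /=; rewrite [in RHS]cM conjCK; ring.
Qed.

Lemma quad (lam : R) (v : X * Y -> C) :
  \sum_p \sum_q (v p)^* * ((lam%:C)%C * id_tens (ptrace1 rho) p q - rho p q) * v q =
  (lam%:C)%C * (cst * \sum_x \sum_j alpha v x j * (alpha v x j)^*) -
  cst * (beta v * (beta v)^*).
Proof.
rewrite -QS -QR mulr_sumr -sumrB; apply: eq_bigr => p _.
rewrite mulr_sumr -sumrB; apply: eq_bigr => q _; ring.
Qed.

Definition Wm : 'M[C]_(a, b * b) := \matrix_(j < a) vecU (U j).

Lemma WmE j (y : Y) : Wm j (mxvec_index y.1 y.2) = w j y.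
Proof. by rewrite /Wm mxE /vecU mxvecE mxE. Qed.

Lemma reidx (f : 'I_(b * b) -> C) :
  \sum_k f k = \sum_(y : Y) f (mxvec_index y.1 y.2).
Proof.
case: (curry_mxvec_bij b b) => g h1 h2.
rewrite (reindex (fun y : Y => mxvec_index y.1 y.2)) //.
exists g => [[y1 y2] _|k _]; first exact: (h1 (y1, y2)).
by have := h2 k; case: (g k) => y1 y2 /= ->.
Qed.

Lemma alphaA v (Vm : 'M[C]_(a, b * b)) x j0 j :
  (forall y : Y, v (x, y) = Vm j0 (mxvec_index y.1 y.2)) ->
  alpha v x j = Amx Vm Wm j0 j.
Proof.
move=> hv; rewrite /Amx mxE reidx /alpha; apply: eq_bigr => y _.
by rewrite !mxE hv /vecU mxvecE mxE.
Qed.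

Lemma cst_gt0 : (0 < a)%N -> (0 < b)%N -> 0 < cst.
Proof.
by move=> ha hb; rewrite /cst mulr_gt0 // invr_gt0 ltr0n.
Qed.

Lemma rankC (lam : R) : ((\rank Wm)%:R <= lam) = ((\rank Wm)%:R <= (lam%:C)%C :> C).
Proof. by rewrite -(rmorph_nat (real_complex R)) lecR. Qed.

Local Notation sig := (id_tens (ptrace1 rho)).

Lemma K1 (lam : R) : (\rank Wm)%:R <= lam ->
  forall v : X * Y -> C,
  0 <= \sum_p \sum_q (v p)^* * ((lam%:C)%C * sig p q - rho p q) * v q.
Proof.
move=> hl v; rewrite quad.
case: (curry_mxvec_bij b b) => g h1 _.
set Vm := \matrix_(j, k) v ((j, j), g k) : 'M[C]_(a, b * b).
have hA : forall j j', alpha v (j, j) j' = Amx Vm Wm j j'.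
  move=> j j'; apply: alphaA => -[y1 y2]; rewrite mxE /=.
  by rewrite (h1 (y1, y2)).
set A := Amx Vm Wm.
have hb : beta v = \tr A.
  by rewrite /beta /mxtrace; apply: eq_bigr => j _; rewrite hA.
have hD : frob A <= \sum_x \sum_j alpha v x j * (alpha v x j)^*.
  rewrite /frob sum_pair; apply: ler_sum => j _.
  have -> : \sum_k A j k * (A j k)^* = \sum_j' alpha v (j, j) j' * (alpha v (j, j) j')^*.
    by apply: eq_bigr => k _; rewrite hA.
  rewrite [X in _ <= X](bigD1 j) //= lerDl.
  by apply: sumr_ge0 => i _; apply: sumr_ge0 => k _; exact: mul_conjC_ge0.
have hU := upper_bound Wm Vm.
have fA0 : 0 <= frob A.
  by apply: sumr_ge0 => i _; apply: sumr_ge0 => k _; exact: mul_conjC_ge0.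
have hl' : (\rank Wm)%:R <= (lam%:C)%C :> C by rewrite -rankC.
have lam0 : 0 <= (lam%:C)%C :> C by apply: le_trans hl'; exact: ler0n.
have c0 : 0 <= cst by rewrite /cst mulr_ge0 // invr_ge0 ler0n.
rewrite hb subr_ge0 [X in _ <= X]mulrCA; apply: (ler_wpM2l c0).
apply: (le_trans hU); apply: (le_trans (ler_wpM2r fA0 hl')).
exact: (ler_wpM2l lam0 hD).
Qed.

Lemma K2 (lam : R) : (0 < a)%N -> (0 < b)%N -> 0 <= lam ->
  (forall v : X * Y -> C,
   0 <= \sum_p \sum_q (v p)^* * ((lam%:C)%C * sig p q - rho p q) * v q) ->
  (\rank Wm)%:R <= lam.
Proof.
move=> ha hb0 l0 hpsd; rewrite leNgt; apply/negP => hlt.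
have [Vm [htr hfr]] := lower_bound Wm.
pose v := fun p : X * Y => (p.1.1 == p.1.2)%:R * Vm p.1.1 (mxvec_index p.2.1 p.2.2).
have hal : forall x j, alpha v x j = (x.1 == x.2)%:R * Amx Vm Wm x.1 j.
  move=> [x1 x2] j; case: (eqVneq x1 x2) => [<-|ne].
    by rewrite mul1r; apply: alphaA => y; rewrite /v /= eqxx mul1r.
  rewrite mul0r /alpha big1 // => y _.
  by rewrite /v /= (negbTE ne) mul0r conjC0 mul0r.
have hbeta : beta v = (\rank Wm)%:R.
  by rewrite /beta -htr /mxtrace; apply: eq_bigr => j _; rewrite hal /= eqxx mul1r.
have hD : \sum_x \sum_j alpha v x j * (alpha v x j)^* = (\rank Wm)%:R.
  rewrite -hfr /frob sum_pair; apply: eq_bigr => j _.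
  rewrite (bigD1 j) //= [X in _ + X]big1 ?addr0.
    by apply: eq_bigr => k _; rewrite hal /= eqxx mul1r.
  move=> k /negbTE kj; apply: big1 => j' _.
  by rewrite hal /= eq_sym kj !mul0r.
have hlt' : (lam%:C)%C < (\rank Wm)%:R :> C.
  by rewrite -(rmorph_nat (real_complex R)) ltcR.
have r0 : 0 < (\rank Wm)%:R :> C.
  by apply: le_lt_trans hlt'; rewrite ler0c.
have := hpsd v; rewrite quad hD hbeta conjC_nat subr_ge0 mulrCA.
have cpos := cst_gt0 ha hb0.
rewrite ler_pM2r; last exact: mulr_gt0 cpos r0.
by move=> h; have := lt_le_trans hlt' h; rewrite ltxx.
Qed.

End Main.

Theorem lemma4 (R : realType) (a b : nat) (ha : (0 < a)%N) (hb : (0 < b)%N)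
    (U : 'I_a -> 'M[R[i]]_b) (hU : forall j, unitary (U j)) :
  Hmin_down (choi (ctrlU_chan U)) = - log2 ((dim_span_vecU U)%:R).
Proof.
rewrite /Hmin_down /Dmax; congr (- log2 _).
have rE : dim_span_vecU U = \rank (Wm U) by [].
rewrite rE.
set r := (\rank (Wm U))%:R : R.
set S := (X in inf X).
have -> : S = [set lam | r <= lam]%classic.
  apply/seteqP; split => lam /=.
    move=> [l0 hl]; exact: (K2 ha hb l0 hl).
  move=> hl; split; first by apply: le_trans hl; exact: ler0n.
  exact: K1.
apply: le_anti; apply/andP; split.
  have hlb : has_lbound [set lam | r <= lam]%classic by exists r => y.
  by apply: (ge_inf hlb) => /=.
apply: lb_le_inf; first by exists r => /=.
by move=> y /=.
Qed.
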